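(* Let $u\in\mathcal{B}^N$, $m\in\mathbb{R}$ and $r\in\mathbb{R}^A$ be such that there exists $\sigma$ with $(r,\sigma)\in F(N,A,u,m)$. Then there is $\Lambda>0$ such that for each $0<\Lambda'\le\Lambda$, if $\mu$ is a solution to $\max_{\gamma:N\to A\text{ bijection}}\sum_{i\in N}\log(\lambda_{i\gamma(i)}(u,r,\Lambda'))$, then for each $i\in N$ and each $\sigma$ with $(r,\sigma)\in F(N,A,u,m)$, $u_i(r_{\mu(i)},\mu(i))=u_i(r_{\sigma(i)},\sigma(i))$.
   Context: Fix a finite set $\{\rho_1,\dots,\rho_k\}\subseteq\mathbb{R}_+$ with $\rho_1=0$. $N=\{1,\dots,n\}$ are agents, $A$ a set of $n$ rooms. $\mathcal{B}$ is the set of utility functions $u_i(r_a,a)=v^i_a-r_a-\rho_i\max\{0,r_a-b_i\}$ with $v^i\in\mathbb{R}^A$, $b_i\ge0$, $\rho_i\in\{\rho_1,\dots,\rho_k\}$. An allocation for $(N,A,u,m)$ is $(r,\sigma)$ with $\sigma:N\to A$ a bijection, $r\in\mathbb{R}^A$, $\sum_ar_a=m$; it is envy-free if $u_i(r_{\sigma(i)},\sigma(i))\ge u_i(r_{\sigma(j)},\sigma(j))$ for all $i,j$; $F(N,A,u,m)$ denotes the set of envy-free allocations. $\lambda_{ia}(u,r):=1+\rho_i$ if $r_a>b_i$ and $:=1$ otherwise. For $\Lambda>0$ and $r$ as in the claim, $\lambda_{ia}(u,r,\Lambda):=\lambda_{ia}(u,r)$ if $u_i(r_{\sigma(i)},\sigma(i))=u_i(r_a,a)$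 (for some/any $\sigma$ with $(r,\sigma)$ envy-free), and $\lambda_{ia}(u,r,\Lambda):=\Lambda$ otherwise. *)

(* Defs.v *)
From HB Require Import structures.
From mathcomp Require Import all_boot all_order all_algebra.
From mathcomp Require Import boolp reals exp.
Set Implicit Arguments. Unset Strict Implicit. Unset Printing Implicit Defensive.
Import Order.TTheory GRing.Theory Num.Theory.
Local Open Scope ring_scope.

Section Defs.
Variables (R : realType) (N A : finType).

(* A profile u in B^N is given by v^i, b_i, rho_i for each agent i:
   u_i(x, a) = v^i_a - x - rho_i * max{0, x - b_i}. *)
Definition util (v : N -> A -> R) (b rho : N -> R) (i : N) (x : R) (a : A) : R :=
  v i a - x - rho i * Num.max 0 (x - b i).

Definition allocation (m : R) (r : A -> R) (sigma : N -> A) : Prop :=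
  bijective sigma /\ \sum_(a : A) r a = m.

Definition envy_free (v : N -> A -> R) (b rho : N -> R) (r : A -> R)
    (sigma : N -> A) : Prop :=
  forall i j : N,
    util v b rho i (r (sigma j)) (sigma j) <= util v b rho i (r (sigma i)) (sigma i).

Definition inF (v : N -> A -> R) (b rho : N -> R) (m : R) (r : A -> R)
    (sigma : N -> A) : Prop :=
  allocation m r sigma /\ envy_free v b rho r sigma.

Definition lam (b rho : N -> R) (r : A -> R) (i : N) (a : A) : R :=
  if b i < r a then 1 + rho i else 1.

Definition lamL (v : N -> A -> R) (b rho : N -> R) (m : R) (r : A -> R)
    (Lam : R) (i : N) (a : A) : R :=
  if `[< exists sigma, inF v b rho m r sigma /\
          util v b rho i (r (sigma i)) (sigma i) = util v b rho i (r a) a >]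
  then lam b rho r i a else Lam.

Definition is_max_sol (v : N -> A -> R) (b rho : N -> R) (m : R) (r : A -> R)
    (Lam : R) (mu : N -> A) : Prop :=
  bijective mu /\
  forall gamma : N -> A, bijective gamma ->
    \sum_(i : N) ln (lamL v b rho m r Lam i (gamma i))
      <= \sum_(i : N) ln (lamL v b rho m r Lam i (mu i)).

End Defs.

(* Main.v *)
Require Import Defs.
From HB Require Import structures.
From mathcomp Require Import all_boot all_order all_algebra.
From mathcomp Require Import boolp reals exp.
Import Order.TTheory GRing.Theory Num.Theory.
Local Open Scope ring_scope.

Theorem lemma1 (R : realType) (rhos : seq R)
  (hrho1 : head 0 rhos = 0) (hrhos : all (fun x => 0 <= x) rhos)
  (n : nat) (A : finType) (hA : #|A| = n)
  (v : 'I_n -> A -> R) (b rho : 'I_n -> R)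
  (hb : forall i, 0 <= b i) (hrho : forall i, rho i \in rhos)
  (m : R) (r : A -> R)
  (hF : exists sigma : 'I_n -> A, inF v b rho m r sigma) :
  exists Lam : R, 0 < Lam /\
    forall Lam' : R, 0 < Lam' -> Lam' <= Lam ->
      forall mu : 'I_n -> A, is_max_sol v b rho m r Lam' mu ->
        forall (i : 'I_n) (sigma : 'I_n -> A), inF v b rho m r sigma ->
          util v b rho i (r (mu i)) (mu i) = util v b rho i (r (sigma i)) (sigma i).
Proof.
have rho0 : forall j, 0 <= rho j by move=> j; exact: (allP hrhos _ (hrho j)).
have EFmax : forall sigma, inF v b rho m r sigma -> forall i a,
    util v b rho i (r a) a <= util v b rho i (r (sigma i)) (sigma i).
  move=> sigma [[[g sg gs] _] ef] i a.
  by have := ef i (g a); rewrite gs.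
set C := \sum_(j : 'I_n) ln (1 + rho j).
have C0 : 0 <= C by apply: sumr_ge0 => j _; apply: ln_ge0; rewrite lerDl.
exists (sequences.expR (- (C + 1))); split; first exact: expR_gt0.
move=> L L0 LL mu [bmu mumax] i sigma sF.
case: (asboolP (exists sigma0, inF v b rho m r sigma0 /\
   util v b rho i (r (sigma0 i)) (sigma0 i) = util v b rho i (r (mu i)) (mu i))) => H.
  case: H => s0 [s0F e]; rewrite -e; apply/eqP; rewrite eq_le.
  by rewrite EFmax // EFmax.
exfalso.
case: hF => s0 s0F.
have bs0 : bijective s0 by case: s0F => [[]].
have := mumax s0 bs0.
have lam1 : forall j a, 1 <= lam b rho r j a.
  by move=> j a; rewrite /lam; case: ifP => _ //; rewrite lerDl.
have laml : forall j a, lam b rho r j a <= 1 + rho j.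
  by move=> j a; rewrite /lam; case: ifP => _ //; rewrite lerDl.
have lnLle : ln L <= - (C + 1).
  by rewrite -(expRK (- (C + 1))) ler_ln // posrE expR_gt0.
have lnL0 : ln L <= 0.
  apply: (le_trans lnLle); rewrite oppr_le0; apply: addr_ge0 => //.
have termle : forall j, ln (lamL v b rho m r L j (mu j)) <= ln (1 + rho j).
  move=> j; rewrite /lamL; case: ifP => _.
    rewrite ler_ln ?posrE ?laml //; apply: (lt_le_trans ltr01); [exact: lam1|].
    by rewrite lerDl.
  by apply: (le_trans lnL0); apply: ln_ge0; rewrite lerDl.
have lhs0 : 0 <= \sum_j ln (lamL v b rho m r L j (s0 j)).
  apply: sumr_ge0 => j _; rewrite /lamL.
  case: asboolP => [_|[]]; first exact: ln_ge0.
  by exists s0.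
have rhsneg : \sum_j ln (lamL v b rho m r L j (mu j)) < 0.
  rewrite (bigD1 i) //=.
  have -> : lamL v b rho m r L i (mu i) = L.
    by rewrite /lamL; case: asboolP => // H'; case: H.
  apply: (le_lt_trans (y := ln L + C)).
    apply: lerD => //; rewrite /C [X in _ <= X](bigD1 i) //=.
    apply: (le_trans (y := \sum_(j | j != i) ln (1 + rho j))).
      by apply: ler_sum => j _; exact: termle.
    by rewrite lerDr; apply: ln_ge0; rewrite lerDl.
  apply: (le_lt_trans (y := - (C + 1) + C)); first by rewrite lerD2r.
  by rewrite opprD addrAC addNr add0r ltrN10.
move=> hle.
have := lt_le_trans rhsneg (le_trans lhs0 hle).
by rewrite ltxx.
Qed.
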